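(* Let $\hat N=\sum_{j\ge0}\hat n_j$ be the particle number operator and $\overline N=\langle\hat N\rangle_{\mathrm{gc}}$. Then $$\langle(\hat N-\overline N)^4\rangle_{\mathrm{gc}}\le9\langle(\hat N-\overline N)^2\rangle_{\mathrm{gc}}^2+\langle(\hat N-\overline N)^2\rangle_{\mathrm{gc}}.$$
   Context: Fix a nondecreasing sequence $(E_j)_{j\ge0}$ of nonnegative one-particle energies (temperature absorbed) and $\mu<E_0$. $\hat n_j=a_j^*a_j$ is the occupation number operator of level $j$ on bosonic Fock space, and $\langle\cdot\rangle_{\mathrm{gc}}$ is the expectation in the grand canonical Gibbs state $Z_{\mathrm{gc}}(\mu)^{-1}\exp(-\sum_j(E_j-\mu)\hat n_j)$, assumed to have finite partition function and moments. *)

(* Defs.v *)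
From HB Require Import structures.
From mathcomp Require Import all_boot all_order all_algebra.
From mathcomp Require Import all_classical all_reals all_analysis.
Set Implicit Arguments. Unset Strict Implicit. Unset Printing Implicit Defensive.
Import Order.TTheory GRing.Theory Num.Theory.
Local Open Scope classical_set_scope.
Local Open Scope ring_scope.

(* Occupation-number basis of the bosonic Fock space: finitely supported
   sequences (n_j)_{j>=0} of occupation numbers. *)
Definition config : set (nat -> nat) :=
  [set n | exists M : nat, forall j : nat, (M <= j)%N -> n j = 0%N].

Definition num_particles (R : realType) (n : nat -> nat) : R :=
  \sum_(j \in [set: nat]) ((n j)%:R : R).

Definition gc_energy (R : realType) (E : nat -> R) (mu : R) (n : nat -> nat) : R :=
  \sum_(j \in [set: nat]) ((E j - mu) * (n j)%:R).

Definition gc_weight (R : realType) (E : nat -> R) (mu : R) (n : nat -> nat) : R :=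
  expR (- gc_energy E mu n).

(* Unnormalised trace  Tr[ f(n^) exp(-sum (E_j-mu) n^_j) ]  for f >= 0
   (diagonal in the occupation basis), as an extended real. *)
Definition gc_trace (R : realType) (E : nat -> R) (mu : R)
  (f : (nat -> nat) -> R) : \bar R :=
  \esum_(n in config) (f n * gc_weight E mu n)%:E.

Definition Zgc (R : realType) (E : nat -> R) (mu : R) : \bar R :=
  gc_trace E mu (fun _ => 1).

(* Grand canonical expectation <f(n^)>_gc of a nonnegative diagonal observable
   (meaningful when the traces are finite). *)
Definition gc_expect (R : realType) (E : nat -> R) (mu : R)
  (f : (nat -> nat) -> R) : R :=
  fine (gc_trace E mu f) / fine (Zgc E mu).

Definition Nbar (R : realType) (E : nat -> R) (mu : R) : R :=
  gc_expect E mu (@num_particles R).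

Definition central_moment (R : realType) (E : nat -> R) (mu : R) (k : nat) : R :=
  gc_expect E mu (fun n => (@num_particles R n - Nbar E mu) ^+ k).

(* Main.v *)
Require Import Defs.
From HB Require Import structures.
From mathcomp Require Import all_boot all_order all_algebra.
From mathcomp Require Import all_classical all_reals all_analysis.
From mathcomp Require Import ring lra.
Import Order.TTheory GRing.Theory Num.Theory.
Import numFieldNormedType.Exports.
Local Open Scope classical_set_scope.
Local Open Scope ring_scope.

Section Alg.
Variable R : realFieldType.

Definition k2 (a1 a2 : R) := a2 - a1 * a1.
Definition k4 (a1 a2 a3 a4 : R) :=
  a4 - 4 * a3 * a1 - 3 * a2 * a2 + 12 * a2 * a1 * a1 - 6 * a1 * a1 * a1 * a1.
Definition Jinv (t0 t1 t2 t3 t4 : R) :=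
  let a1 := t1 / t0 in let a2 := t2 / t0 in let a3 := t3 / t0 in let a4 := t4 / t0 in
  0 <= k2 a1 a2 /\ k4 a1 a2 a3 a4 <= 6 * k2 a1 a2 ^+ 2 + k2 a1 a2.

Lemma solve_mode (q g0 x y : R) : g0 = 1 + q * g0 -> x = q * (y + x) -> x = q * g0 * y.
Proof.
move=> e0 e.
have e0' : g0 - q * g0 = 1 by rewrite {1}e0; ring.
have ex : x - q * x = q * y by rewrite {1}e; ring.
rewrite -[x]mulr1 -e0'.
transitivity (g0 * (x - q * x)); first by ring.
by rewrite ex; ring.
Qed.

Arguments solve_mode {q g0 x y}.

Lemma alg_step (q g0 g1 g2 g3 g4 t0 t1 t2 t3 t4 s0 s1 s2 s3 s4 : R) :
  0 <= q -> 0 < g0 -> 0 < t0 ->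
  g0 = 1 + q * g0 -> g1 = q * (g0 + g1) -> g2 = q * (g0 + 2 * g1 + g2) ->
  g3 = q * (g0 + 3 * g1 + 3 * g2 + g3) ->
  g4 = q * (g0 + 4 * g1 + 6 * g2 + 4 * g3 + g4) ->
  s0 = g0 * t0 -> s1 = g1 * t0 + g0 * t1 -> s2 = g2 * t0 + 2 * g1 * t1 + g0 * t2 ->
  s3 = g3 * t0 + 3 * g2 * t1 + 3 * g1 * t2 + g0 * t3 ->
  s4 = g4 * t0 + 4 * g3 * t1 + 6 * g2 * t2 + 4 * g1 * t3 + g0 * t4 ->
  Jinv t0 t1 t2 t3 t4 -> Jinv s0 s1 s2 s3 s4.
Proof.
move=> q0 g0p t0p e0 e1 e2 e3 e4 -> -> -> -> ->.
set p := q * g0.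
have p0 : 0 <= p by rewrite /p mulr_ge0 // ltW.
have f1 : g1 = q * g0 * g0 by exact: solve_mode e0 e1.
have f2 : g2 = p * (g0 + 2 * g1) by exact: solve_mode e0 e2.
have f3 : g3 = p * (g0 + 3 * g1 + 3 * g2) by exact: solve_mode e0 e3.
have f4 : g4 = p * (g0 + 4 * g1 + 6 * g2 + 4 * g3) by exact: solve_mode e0 e4.
rewrite -/p in f1.
have g0n : g0 != 0 by rewrite gt_eqF.
have t0n : t0 != 0 by rewrite gt_eqF.
have [a1 ->] : exists a1, t1 = a1 * t0 by exists (t1 / t0); rewrite divfK.
have [a2 ->] : exists a2, t2 = a2 * t0 by exists (t2 / t0); rewrite divfK.
have [a3 ->] : exists a3, t3 = a3 * t0 by exists (t3 / t0); rewrite divfK.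
have [a4 ->] : exists a4, t4 = a4 * t0 by exists (t4 / t0); rewrite divfK.
rewrite /Jinv !mulfK // f4 f3 f2 f1.
clearbody p.
have -> : (p * g0 * t0 + g0 * (a1 * t0)) / (g0 * t0) = a1 + p.
  by field; rewrite g0n t0n.
have -> : (p * (g0 + 2 * (p * g0)) * t0 + 2 * (p * g0) * (a1 * t0) + g0 * (a2 * t0)) / (g0 * t0)
   = a2 + 2 * a1 * p + p * (1 + 2 * p).
  by field; rewrite g0n t0n.
have -> : (p * (g0 + 3 * (p * g0) + 3 * (p * (g0 + 2 * (p * g0)))) * t0 +
     3 * (p * (g0 + 2 * (p * g0))) * (a1 * t0) + 3 * (p * g0) * (a2 * t0) +
     g0 * (a3 * t0)) / (g0 * t0) =
  a3 + 3 * a2 * p + 3 * a1 * (p * (1 + 2 * p)) + p * (1 + 3 * p + 3 * (p * (1 + 2 * p))).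
  by field; rewrite g0n t0n.
have -> : (p * (g0 + 4 * (p * g0) + 6 * (p * (g0 + 2 * (p * g0))) +
      4 * (p * (g0 + 3 * (p * g0) + 3 * (p * (g0 + 2 * (p * g0)))))) * t0 +
     4 * (p * (g0 + 3 * (p * g0) + 3 * (p * (g0 + 2 * (p * g0))))) * (a1 * t0)
     + 6 * (p * (g0 + 2 * (p * g0))) * (a2 * t0) +
     4 * (p * g0) * (a3 * t0) + g0 * (a4 * t0)) / (g0 * t0) =
  a4 + 4 * a3 * p + 6 * a2 * (p * (1 + 2 * p)) + 4 * a1 * (p * (1 + 3 * p + 3 * (p * (1 + 2 * p))))
  + p * (1 + 4 * p + 6 * (p * (1 + 2 * p)) + 4 * (p * (1 + 3 * p + 3 * (p * (1 + 2 * p))))).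
  by field; rewrite g0n t0n.
rewrite /k2 /k4 => -[K2 K4].
set A := a2 - a1 * a1.
set B := p + p * p.
have HA : 0 <= A by [].
have HB : 0 <= B by rewrite /B addr_ge0 ?mulr_ge0.
have E2 : a2 + 2 * a1 * p + p * (1 + 2 * p) - (a1 + p) * (a1 + p) = A + B.
  by rewrite /A /B; ring.
rewrite E2; split; first by rewrite addr_ge0.
set L := (X in X <= _).
have E4 : L = (a4 - 4 * a3 * a1 - 3 * a2 * a2 + 12 * a2 * a1 * a1 - 6 * a1 * a1 * a1 * a1)
     + (B + 6 * B ^+ 2).
  rewrite /L /B; ring.
rewrite E4 -/A in K4 *.
have AB := mulr_ge0 HA HB.
nra.
Qed.
End Alg.
Arguments k2 {R}.
Arguments k4 {R}.
Arguments Jinv {R}.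
Arguments alg_step {R q g0 g1 g2 g3 g4 t0 t1 t2 t3 t4 s0 s1 s2 s3 s4}.

Section Aux.
Variables (R : realType) (E : nat -> R) (mu : R).

Local Notation w := (gc_weight E mu).
Local Notation NP := (@num_particles R).

Definition supp (L : nat) : set (nat -> nat) :=
  [set n | forall j, (L <= j)%N -> n j = 0%N].
Definition qq j : R := expR (- (E j - mu)).
Definition upd (n : nat -> nat) (L m : nat) : nat -> nat :=
  fun j => if j == L then m else n j.

Lemma fsum_nat (F : nat -> R) L : (forall j, (L <= j)%N -> F j = 0) ->
  \sum_(j \in [set: nat]) F j = \sum_(j < L) F j.
Proof.
move=> HF; rewrite fsbig_ord; apply/esym/fsbig_widen => // j [_ /=].
by move/negP; rewrite -leqNgt => /HF.
Qed.

Lemma NP_supp {L n} : supp L n -> NP n = \sum_(j < L) (n j)%:R.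
Proof. by move=> H; rewrite /num_particles (@fsum_nat _ L) // => j /H ->. Qed.

Lemma w_supp {L n} : supp L n -> w n = \prod_(j < L) qq j ^+ n j.
Proof.
move=> H; rewrite /gc_weight /gc_energy (@fsum_nat _ L); last first.
  by move=> j /H ->; rewrite mulr0.
rewrite -sumrN expR_sum; apply: eq_bigr => j _.
by rewrite -mulNr expRM_natr.
Qed.

Lemma upd_supp {L n} m : supp L n -> supp L.+1 (upd n L m).
Proof.
move=> H j Lj; rewrite /upd; case: eqP => [jL|_].
  by subst; rewrite ltnn in Lj.
by apply: H; exact: ltnW.
Qed.

Lemma NP_upd L n m : supp L n -> NP (upd n L m) = NP n + m%:R.
Proof.
move=> H; rewrite (NP_supp (upd_supp m H)) (NP_supp H) big_ord_recr /= /upd eqxx.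
congr (_ + _); apply: eq_bigr => i _ /=.
by rewrite ifN // neq_ltn ltn_ord.
Qed.

Lemma w_upd L n m : supp L n -> w (upd n L m) = w n * qq L ^+ m.
Proof.
move=> H; rewrite (w_supp (upd_supp m H)) (w_supp H) big_ord_recr /= /upd eqxx.
congr (_ * _); apply: eq_bigr => i _ /=.
by rewrite ifN // neq_ltn ltn_ord.
Qed.

Lemma NP_ge0 n : 0 <= NP n.
Proof. by apply: fsumr_ge0 => j _; exact: ler0n. Qed.

Lemma w_ge0 n : 0 <= w n.
Proof. exact: expR_ge0. Qed.

Lemma qq_ge0 j : 0 <= qq j.
Proof. exact: expR_ge0. Qed.

Lemma supp_config L : supp L `<=` config.
Proof. by move=> n H; exists L. Qed.

Lemma supp_mono L L' : (L <= L')%N -> supp L `<=` supp L'.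
Proof. by move=> LL n H j Hj; apply: H; exact: leq_trans Hj. Qed.

Lemma supp0 : supp 0 = [set (fun _ => 0%N)].
Proof.
apply/seteqP; split => n /=.
  by move=> H; apply/funext => j; apply: H.
by move=> -> j.
Qed.

Lemma NP0 : NP (fun _ => 0%N) = 0.
Proof. by rewrite (@NP_supp 0) ?big_ord0 // supp0. Qed.

Lemma w0 : w (fun _ => 0%N) = 1.
Proof. by rewrite (@w_supp 0) ?big_ord0 // supp0. Qed.


Lemma esum_subset (T : choiceType) (A B : set T) (f : T -> \bar R) :
  A `<=` B -> (\esum_(i in A) f i <= \esum_(i in B) f i)%E.
Proof.
move=> AB; apply: ereal_sup_le => x [F [fF FA] <-]; exists F => //.
by split => //; exact: subset_trans AB.
Qed.

Lemma esumZr (T : choiceType) (A : set T) (r : R) (f : T -> R) : 0 <= r ->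
  \esum_(i in A) (r * f i)%:E = (r%:E * \esum_(i in A) (f i)%:E)%E.
Proof.
move=> r0; rewrite /esum -ereal_supZl //; last first.
  by apply/set0P; exists (\sum_(x \in set0) (f x)%:E); exists set0 => //; exact: fsets_set0.
congr ereal_sup; apply/seteqP; split => x /=.
  move=> [F [fF FA] <-]; exists (\sum_(i \in F) (f i)%:E); first by exists F.
  by rewrite !fsumEFin // -EFinM mulr_fsumr.
move=> [y [F [fF FA] <-] <-]; exists F => //.
by rewrite !fsumEFin // -EFinM mulr_fsumr.
Qed.

Lemma esum_sumr (T : choiceType) (A : set T) (k : nat) (F : 'I_k -> T -> R) :
  (forall i x, A x -> 0 <= F i x) ->
  \esum_(x in A) (\sum_(i < k) F i x)%:E = (\sum_(i < k) \esum_(x in A) (F i x)%:E)%E.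
Proof.
move=> F0; under eq_esum do rewrite -sumEFin.
by rewrite esum_sum // => x i Ax _; rewrite lee_fin; exact: F0.
Qed.

Definition TT (A : set (nat -> nat)) (k : nat) : \bar R :=
  \esum_(n in A) ((NP n ^+ k * w n)%:E).
Definition GG (j k : nat) : \bar R :=
  \esum_(m in [set: nat]) (((m%:R : R) ^+ k * qq j ^+ m)%:E).

Lemma TT_ge0 A k : (0 <= TT A k)%E.
Proof.
apply: esum_ge0 => n _; rewrite lee_fin mulr_ge0 ?exprn_ge0 ?NP_ge0 ?w_ge0 //.
Qed.

Lemma GG_ge0 j k : (0 <= GG j k)%E.
Proof.
apply: esum_ge0 => n _; rewrite lee_fin mulr_ge0 ?exprn_ge0 ?qq_ge0 //.
Qed.

Lemma step L k : (forall i, (i <= k)%N -> GG L i \is a fin_num) ->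
  TT (supp L.+1) k =
  (\sum_(i < k.+1) ((('C(k, i))%:R * fine (GG L (k - i)))%:E * TT (supp L) i))%E.
Proof.
move=> gfin.
rewrite /TT (reindex_esum (supp L `*`` (fun _ => [set: nat])) (supp L.+1)
   (fun p => upd p.1 L p.2)); last first.
  split.
  - by move=> [n m] [/= Hn _]; exact: upd_supp.
  - move=> [n1 m1] [n2 m2] /set_mem [/= H1 _] /set_mem [/= H2 _] /= e.
    have em : m1 = m2 by have := congr1 (fun f => f L) e; rewrite /upd eqxx => ->.
    subst m2; f_equal; apply/funext => j.
    have := congr1 (fun f => f j) e; rewrite /upd; case: eqP => // ->.
    by rewrite H1 // H2.
  - move=> n' Hn'; exists (fun j => if j == L then 0%N else n' j, n' L).
      split => //= j Lj; case: eqP => // /eqP jL; apply: Hn'.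
      by rewrite ltn_neqAle eq_sym jL.
    apply/funext => j; rewrite /upd /=; case: eqP => // -> //.
rewrite -(@esum_esum _ _ _ (supp L) (fun _ => [set: nat])
  (fun n m => ((NP (upd n L m)) ^+ k * w (upd n L m))%:E)); last first.
  by move=> n m _ _; rewrite lee_fin mulr_ge0 ?exprn_ge0 ?NP_ge0 ?w_ge0.
have inner : forall n, supp L n ->
   \esum_(m in [set: nat]) ((NP (upd n L m)) ^+ k * w (upd n L m))%:E =
   (\sum_(i < k.+1) (('C(k, i)%:R * fine (GG L (k - i))) * (NP n ^+ i * w n))%:E).
  move=> n Hn.
  under eq_esum => m _ do rewrite NP_upd // w_upd // addrC exprDn mulr_suml.
  rewrite esum_sumr; last first.
    move=> i m _; rewrite -mulr_natr !mulr_ge0 ?exprn_ge0 ?N0 ?c0 ?ler0n ?NP_ge0 ?w_ge0 ?qq_ge0 ?ler0n //.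
  apply: eq_bigr => i _.
  rewrite (eq_esum (b := fun m => (('C(k, i)%:R * NP n ^+ i * w n) *
      ((m%:R : R) ^+ (k - i) * qq L ^+ m))%:E)); last first.
    by move=> m _; congr EFin; rewrite -mulr_natr; ring.
  rewrite esumZr; last by rewrite !mulr_ge0 ?exprn_ge0 ?N0 ?c0 ?ler0n ?NP_ge0 ?w_ge0 ?ler0n.
  rewrite -/(GG L (k - i)) -[GG L (k - i)](fineK (gfin _ (leq_subr i k))).
  by rewrite -EFinM; congr EFin; ring.
rewrite (eq_esum inner); under eq_esum do rewrite sumEFin.
rewrite esum_sumr; last first.
  move=> i n _; rewrite !mulr_ge0 ?exprn_ge0 ?N0 ?c0 ?ler0n ?NP_ge0 ?w_ge0 ?ler0n ?fine_ge0 ?GG_ge0 //.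
apply: eq_bigr => i _; rewrite esumZr //.
by rewrite mulr_ge0 ?ler0n ?fine_ge0 ?GG_ge0.
Qed.


Lemma geo j k : (forall i, (i <= k)%N -> GG j i \is a fin_num) ->
  GG j k = ((k == 0%N)%:R + qq j * \sum_(i < k.+1) 'C(k, i)%:R * fine (GG j i))%:E.
Proof.
move=> gfin.
rewrite {1}/GG (esumID [set 0%N]); last first.
  by move=> m _; rewrite lee_fin mulr_ge0 ?exprn_ge0 ?qq_ge0.
rewrite setTI esum_set1; last by rewrite lee_fin mulr_ge0 ?exprn_ge0 ?qq_ge0.
rewrite expr0n expr0 mulr1 setTI.
rewrite (reindex_esum [set: nat] (~` [set 0%N]) succn); last first.
  split.
  - by move=> m _ /= [].
  - by move=> m1 m2 _ _ [->].
  - move=> m /= m0; exists m.-1 => //; rewrite prednK // lt0n; exact/eqP.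
rewrite EFinD; congr (_ + _)%E.
rewrite (eq_esum (b := fun m => (qq j * \sum_(i < k.+1) ('C(k,i)%:R *
   ((m%:R:R) ^+ i * qq j ^+ m)))%:E)); last first.
  move=> m _; congr EFin.
  rewrite exprS -addn1 natrD addrC exprDn mulr_suml mulr_sumr.
  by apply: eq_bigr => i _; rewrite expr1n mul1r -mulr_natr; ring.
rewrite esumZr ?qq_ge0 // esum_sumr; last first.
  by move=> i m _; rewrite mulr_ge0 ?ler0n ?mulr_ge0 ?exprn_ge0 ?N0 ?c0 ?ler0n ?qq_ge0.
rewrite (eq_bigr (fun i : 'I_k.+1 => (('C(k,i)%:R * fine (GG j i))%:E))); last first.
  move=> i _; rewrite esumZr ?ler0n // -/(GG j i).
  by rewrite -[GG j i](fineK (gfin _ (ltn_ord i))).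
by rewrite sumEFin -EFinM.
Qed.

Lemma GG_le j k : (GG j k <= TT config k)%E.
Proof.
have H0 : supp j (fun _ => 0%N) by [].
rewrite /GG /TT.
rewrite (_ : \esum_(m in [set: nat]) _ = \esum_(n in (fun m => upd (fun _ => 0%N) j m) @` [set: nat])
   ((NP n ^+ k * w n)%:E)); last first.
  rewrite esum_image; last first.
    by move=> m1 m2 _ _ e; have := congr1 (fun f => f j) e; rewrite /upd eqxx => ->.
  by apply: eq_esum => m _; rewrite NP_upd // w_upd // NP0 w0 add0r mul1r.
by apply: esum_subset => _ [m _ <-]; exact: supp_config (upd_supp m H0).
Qed.

Lemma fin_in_supp (F : set (nat -> nat)) : finite_set F -> F `<=` config ->
  exists L, F `<=` supp L.
Proof.
move=> fF Fc.
suff: forall s : seq (nat -> nat), (forall n, n \in s -> config n) ->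
    exists L, forall n, n \in s -> supp L n.
  move=> /(_ (finmap.enum_fset (fset_set F))) [].
    by move=> n; rewrite in_fset_set // inE => /Fc.
  move=> L HL; exists L => n Fn; apply: HL; rewrite in_fset_set // inE //.
elim=> [|n s IH] Hs; first by exists 0%N.
have [M HM] := Hs n (mem_head _ _).
have [L HL] : exists L, forall x, x \in s -> supp L x.
  by apply: IH => x xs; apply: Hs; rewrite in_cons xs orbT.
exists (maxn M L) => x; rewrite in_cons => /orP [/eqP -> | xs] j Hj.
  by apply: HM; exact: leq_trans (leq_maxl M L) Hj.
by apply: (HL x xs); exact: leq_trans (leq_maxr M L) Hj.
Qed.

Lemma TT_sup k : TT config k = ereal_sup (range (fun L => TT (supp L) k)).
Proof.
apply/eqP; rewrite eq_le; apply/andP; split.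
  apply: ge_ereal_sup => x [F [fF Fc] <-].
  have [L FL] := @fin_in_supp F fF Fc.
  apply: (@le_trans _ _ (TT (supp L) k)); last by apply: ereal_sup_ubound; exists L.
  by apply: ereal_sup_ubound; exists F.
by apply: ge_ereal_sup => x [L _ <-]; apply: esum_subset; exact: supp_config.
Qed.

Lemma TT_mono k : {homo (fun L => TT (supp L) k) : L L' / (L <= L')%N >-> (L <= L')%E}.
Proof. by move=> L L' LL; apply: esum_subset; exact: supp_mono. Qed.

Lemma TT_base k : TT (supp 0) k = ((0:R) ^+ k)%:E.
Proof.
rewrite /TT supp0 esum_set1 ?NP0 ?w0 ?mulr1 // lee_fin mulr_ge0 ?exprn_ge0 ?NP_ge0 ?w_ge0 //.
Qed.


Lemma exp_sum2 (F : nat -> R) : \sum_(i < 2) F i = F 0%N + F 1%N.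
Proof. by rewrite !big_ord_recr big_ord0 /= add0r. Qed.
Lemma exp_sum3 (F : nat -> R) : \sum_(i < 3) F i = F 0%N + F 1%N + F 2%N.
Proof. by rewrite !big_ord_recr big_ord0 /= add0r. Qed.
Lemma exp_sum4 (F : nat -> R) : \sum_(i < 4) F i = F 0%N + F 1%N + F 2%N + F 3%N.
Proof. by rewrite !big_ord_recr big_ord0 /= add0r. Qed.
Lemma exp_sum5 (F : nat -> R) :
  \sum_(i < 5) F i = F 0%N + F 1%N + F 2%N + F 3%N + F 4%N.
Proof. by rewrite !big_ord_recr big_ord0 /= add0r. Qed.

Lemma C21 : 'C(2, 1) = 2%N. Proof. by []. Qed.
Lemma C31 : 'C(3, 1) = 3%N. Proof. by []. Qed.
Lemma C32 : 'C(3, 2) = 3%N. Proof. by []. Qed.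
Lemma C41 : 'C(4, 1) = 4%N. Proof. by []. Qed.
Lemma C42 : 'C(4, 2) = 6%N. Proof. by []. Qed.
Lemma C43 : 'C(4, 3) = 4%N. Proof. by []. Qed.

Hypothesis hZ : (Zgc E mu < +oo)%E.
Hypothesis hmom : (gc_trace E mu (fun n => (NP n ^+ 4)%R) < +oo)%E.

Lemma Z_TT : Zgc E mu = TT config 0.
Proof. by apply: eq_esum => n _; rewrite expr0. Qed.

Lemma Tlt k : (k <= 4)%N -> (TT config k < +oo)%E.
Proof.
move=> k4.
apply: (@le_lt_trans _ _ (TT config 0 + TT config 4)%E); last first.
  by rewrite lte_add_pinfty // -Z_TT.
rewrite /TT -esumD; last 2 first.
- by move=> n _; rewrite lee_fin mulr_ge0 ?exprn_ge0 ?NP_ge0 ?w_ge0.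
- by move=> n _; rewrite lee_fin mulr_ge0 ?exprn_ge0 ?NP_ge0 ?w_ge0.
apply: le_esum => n _; rewrite -EFinD lee_fin -mulrDl ler_wpM2r ?w_ge0 // expr0.
have N0 := NP_ge0 n.
case: (leP (NP n) 1) => h.
  apply: (@le_trans _ _ 1); first exact: exprn_ile1.
  by rewrite lerDl exprn_ge0.
apply: (@le_trans _ _ (NP n ^+ 4)); last by rewrite lerDr.
by apply: ler_weXn2l => //; exact: ltW.
Qed.

Lemma Tfin k : (k <= 4)%N -> TT config k \is a fin_num.
Proof. by move=> k4; rewrite ge0_fin_numE ?TT_ge0 ?Tlt. Qed.

Lemma TLfin L k : (k <= 4)%N -> TT (supp L) k \is a fin_num.
Proof.
move=> k4; rewrite ge0_fin_numE ?TT_ge0 //.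
apply: (@le_lt_trans _ _ (TT config k)); last exact: Tlt.
by apply: esum_subset; exact: supp_config.
Qed.

Lemma Gfin L k : (k <= 4)%N -> GG L k \is a fin_num.
Proof.
move=> k4; rewrite ge0_fin_numE ?GG_ge0 //.
apply: (@le_lt_trans _ _ (TT config k)); [exact: GG_le | exact: Tlt].
Qed.

Definition tt L k := fine (TT (supp L) k).
Definition gg L k := fine (GG L k).
Definition TC k := fine (TT config k).

Lemma t_step L k : (k <= 4)%N ->
  tt L.+1 k = \sum_(i < k.+1) 'C(k, i)%:R * gg L (k - i) * tt L i.
Proof.
move=> k4; rewrite /tt step; last first.
  by move=> i ik; apply: Gfin; exact: leq_trans ik k4.
rewrite (eq_bigr (fun i : 'I_k.+1 => ('C(k, i)%:R * gg L (k - i) * tt L i)%:E)).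
  by rewrite sumEFin.
move=> i _; have i4 : (i <= 4)%N by apply: leq_trans k4; rewrite -ltnS.
by rewrite -[TT (supp L) i](fineK (TLfin L i i4)) -EFinM.
Qed.

Lemma g_rec L k : (k <= 4)%N ->
  gg L k = (k == 0%N)%:R + qq L * \sum_(i < k.+1) 'C(k, i)%:R * gg L i.
Proof.
move=> k4; rewrite /gg geo //= => i ik; apply: Gfin; exact: leq_trans ik k4.
Qed.

Lemma t_pos L : 1 <= tt L 0.
Proof.
have : (TT (supp 0) 0 <= TT (supp L) 0)%E by apply: TT_mono.
by rewrite TT_base expr0 -[TT (supp L) 0](fineK (TLfin L 0 _)) // lee_fin.
Qed.

Lemma g_pos L : 1 <= gg L 0.
Proof.
have := g_rec L 0 (leq0n 4); rewrite big_ord1 bin0 mul1r /= => ->.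
by rewrite lerDl mulr_ge0 ?qq_ge0 // fine_ge0 // GG_ge0.
Qed.


Ltac simpl_bin := rewrite ?bin0 ?binn ?C21 ?C31 ?C32 ?C41 ?C42 ?C43 ?subSS ?subn0 ?subnn /=.

Lemma inv_all L : Jinv (tt L 0) (tt L 1) (tt L 2) (tt L 3) (tt L 4).
Proof.
elim: L => [|L IH].
  rewrite /tt !TT_base /= !expr0n /= /Jinv /k2 /k4 !mul0r !mulr0 ?subr0 ?addr0.
  split; [lra | nra].
have G0 : gg L 0 = 1 + qq L * gg L 0.
  by rewrite {1}(g_rec L 0) // !big_ord_recr big_ord0 /=; simpl_bin; ring.
have G1 : gg L 1 = qq L * (gg L 0 + gg L 1).
  by rewrite {1}(g_rec L 1) // !big_ord_recr big_ord0 /=; simpl_bin; ring.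
have G2 : gg L 2 = qq L * (gg L 0 + 2 * gg L 1 + gg L 2).
  by rewrite {1}(g_rec L 2) // !big_ord_recr big_ord0 /=; simpl_bin; ring.
have G3 : gg L 3 = qq L * (gg L 0 + 3 * gg L 1 + 3 * gg L 2 + gg L 3).
  by rewrite {1}(g_rec L 3) // !big_ord_recr big_ord0 /=; simpl_bin; ring.
have G4 : gg L 4 = qq L * (gg L 0 + 4 * gg L 1 + 6 * gg L 2 + 4 * gg L 3 + gg L 4).
  by rewrite {1}(g_rec L 4) // !big_ord_recr big_ord0 /=; simpl_bin; ring.
have S0 : tt L.+1 0 = gg L 0 * tt L 0.
  by rewrite t_step // !big_ord_recr big_ord0 /=; simpl_bin; ring.
have S1 : tt L.+1 1 = gg L 1 * tt L 0 + gg L 0 * tt L 1.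
  by rewrite t_step // !big_ord_recr big_ord0 /=; simpl_bin; ring.
have S2 : tt L.+1 2 = gg L 2 * tt L 0 + 2 * gg L 1 * tt L 1 + gg L 0 * tt L 2.
  by rewrite t_step // !big_ord_recr big_ord0 /=; simpl_bin; ring.
have S3 : tt L.+1 3 = gg L 3 * tt L 0 + 3 * gg L 2 * tt L 1 + 3 * gg L 1 * tt L 2
    + gg L 0 * tt L 3.
  by rewrite t_step // !big_ord_recr big_ord0 /=; simpl_bin; ring.
have S4 : tt L.+1 4 = gg L 4 * tt L 0 + 4 * gg L 3 * tt L 1 + 6 * gg L 2 * tt L 2
    + 4 * gg L 1 * tt L 3 + gg L 0 * tt L 4.
  by rewrite t_step // !big_ord_recr big_ord0 /=; simpl_bin; ring.
apply: (alg_step (qq_ge0 L) _ _ G0 G1 G2 G3 G4 S0 S1 S2 S3 S4 IH).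
- by apply: (lt_le_trans ltr01); exact: g_pos.
- by apply: (lt_le_trans ltr01); exact: t_pos.
Qed.


Definition Phi (a1 a2 a3 a4 : R) :=
  6 * (k2 a1 a2 * k2 a1 a2) + k2 a1 a2 - k4 a1 a2 a3 a4.

Lemma Phi_cvg (u1 u2 u3 u4 : nat -> R) (x1 x2 x3 x4 : R) :
  u1 n @[n --> \oo] --> x1 -> u2 n @[n --> \oo] --> x2 ->
  u3 n @[n --> \oo] --> x3 -> u4 n @[n --> \oo] --> x4 ->
  Phi (u1 n) (u2 n) (u3 n) (u4 n) @[n --> \oo] --> Phi x1 x2 x3 x4.
Proof.
move=> h1 h2 h3 h4.
have cc : forall c : R, (fun=> c) n @[n --> \oo] --> c by move=> c; exact: cvg_cst.
have k2c : u2 n - u1 n * u1 n @[n --> \oo] --> x2 - x1 * x1.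
  by apply: cvgB => //; apply: cvgM.
have k4c : u4 n - 4 * u3 n * u1 n - 3 * u2 n * u2 n + 12 * u2 n * u1 n * u1 n
   - 6 * u1 n * u1 n * u1 n * u1 n @[n --> \oo] -->
   x4 - 4 * x3 * x1 - 3 * x2 * x2 + 12 * x2 * x1 * x1 - 6 * x1 * x1 * x1 * x1.
  apply: cvgB; first apply: cvgD; first apply: cvgB; first apply: cvgB => //.
  - by apply: cvgM => //; apply: cvgM => //.
  - by apply: cvgM => //; apply: cvgM => //.
  - by apply: cvgM => //; apply: cvgM => //; apply: cvgM => //.
  - by apply: cvgM => //; apply: cvgM => //; apply: cvgM => //; apply: cvgM => //.
rewrite /Phi /k2 /k4.
apply: cvgB => //; apply: cvgD => //; apply: cvgM => //; apply: cvgM => //.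
Qed.


Lemma t_cvg k : (k <= 4)%N -> tt L k @[L --> \oo] --> TC k.
Proof.
move=> k4.
have h := ereal_nondecreasing_cvgn (TT_mono k).
rewrite -TT_sup -[TT config k](fineK (Tfin k k4)) in h.
by move/fine_cvgP: h => [_].
Qed.

Lemma TC0_ge1 : 1 <= TC 0.
Proof.
have : (TT (supp 0) 0 <= TT config 0)%E by apply: esum_subset; exact: supp_config.
by rewrite TT_base expr0 -[TT config 0](fineK (Tfin 0 (leq0n 4))) lee_fin.
Qed.

Lemma a_cvg k : (k <= 4)%N -> tt L k / tt L 0 @[L --> \oo] --> TC k / TC 0.
Proof.
move=> k4; apply: cvgM; first exact: t_cvg.
apply: cvgV; last exact: t_cvg.
by rewrite gt_eqF // (lt_le_trans ltr01 TC0_ge1).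
Qed.

Lemma Phi_lim : 0 <= Phi (TC 1 / TC 0) (TC 2 / TC 0) (TC 3 / TC 0) (TC 4 / TC 0).
Proof.
have hc := Phi_cvg _ _ _ _ _ _ _ _ (a_cvg 1 isT) (a_cvg 2 isT) (a_cvg 3 isT) (a_cvg 4 isT).
apply: (closed_cvg _ (@closed_ge R 0) _ _ hc).
apply: nearW => L /=.
have [_ H] := inv_all L.
by rewrite /Phi; move: H; rewrite expr2; lra.
Qed.


Definition ES (f : (nat -> nat) -> R) : \bar R := \esum_(n in config) (f n * w n)%:E.

Lemma ES1 a i : 0 <= a -> (i <= 4)%N -> ES (fun n => a * NP n ^+ i) = (a * TC i)%:E.
Proof.
move=> a0 i4; rewrite /ES; under eq_esum do rewrite -mulrA.
rewrite esumZr // -/(TT config i) -[TT config i](fineK (Tfin i i4)).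
by rewrite -EFinM.
Qed.

Lemma ESadd a i f : 0 <= a -> (i <= 4)%N -> (forall n, 0 <= f n) ->
  ES (fun n => a * NP n ^+ i + f n) = ((a * TC i)%:E + ES f)%E.
Proof.
move=> a0 i4 f0; rewrite /ES; under eq_esum do rewrite mulrDl EFinD.
rewrite esumD; first by congr (_ + _)%E; exact: ES1.
- by move=> n _; rewrite lee_fin !mulr_ge0 ?exprn_ge0 ?N0 ?c0 ?ler0n ?NP_ge0 ?w_ge0.
- by move=> n _; rewrite lee_fin mulr_ge0 ?w_ge0.
Qed.

Lemma sub_trick (h P Q : (nat -> nat) -> R) (x y : R) :
  (forall n, 0 <= h n) -> (forall n, 0 <= P n) -> (forall n, h n + P n = Q n) ->
  ES P = x%:E -> ES Q = y%:E -> fine (ES h) = y - x.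
Proof.
move=> h0 P0 hPQ eP eQ.
have : (ES h + ES P)%E = ES Q.
  rewrite /ES -esumD.
  - by apply: eq_esum => n _; rewrite -EFinD -mulrDl hPQ.
  - by move=> n _; rewrite lee_fin mulr_ge0 ?w_ge0.
  - by move=> n _; rewrite lee_fin mulr_ge0 ?w_ge0.
rewrite eP eQ; case: (ES h) => [r | |] //= [<-].
by rewrite addrK.
Qed.


Ltac pos := repeat first [ assumption | apply: mulr_ge0 | apply: addr_ge0 |
  apply: exprn_ge0 | apply: NP_ge0 | apply: ler0n ].

Lemma main_ineq :
  central_moment E mu 4 <= 9 * central_moment E mu 2 ^+ 2 + central_moment E mu 2.
Proof.
set c := Nbar E mu.
have T0p : 0 < TC 0 := lt_le_trans ltr01 TC0_ge1.
have T0n : TC 0 != 0 by rewrite gt_eqF.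
have cE : c = TC 1 / TC 0.
  by rewrite /c /Nbar /gc_expect Z_TT; congr (fine _ / _).
have c0 : 0 <= c by rewrite cE divr_ge0 ?fine_ge0 ?TT_ge0 // ltW.
have N0 := NP_ge0.
have C2 : central_moment E mu 2 = ((TC 2 + c ^+ 2 * TC 0) - 2 * c * TC 1) / TC 0.
  rewrite /central_moment /gc_expect Z_TT -/c.
  have -> : gc_trace E mu (fun n => (NP n - c) ^+ 2) = ES (fun n => (NP n - c) ^+ 2) by [].
  rewrite (@sub_trick (fun n => (NP n - c) ^+ 2) (fun n => (2 * c) * NP n ^+ 1)
     (fun n => 1 * NP n ^+ 2 + c ^+ 2 * NP n ^+ 0) (2 * c * TC 1) (TC 2 + c ^+ 2 * TC 0)) //.
  - by move=> n; exact: sqr_ge0.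
  - by move=> n; pos.
  - by move=> n; ring.
  - by rewrite ES1 //; pos.
  - rewrite ESadd //; last by move=> n; pos.
    by rewrite ES1 //; [rewrite mul1r EFinD | pos].
have C4 : central_moment E mu 4 =
    ((TC 4 + (6 * c ^+ 2 * TC 2 + c ^+ 4 * TC 0)) - (4 * c * TC 3 + 4 * c ^+ 3 * TC 1)) / TC 0.
  rewrite /central_moment /gc_expect Z_TT -/c.
  have -> : gc_trace E mu (fun n => (NP n - c) ^+ 4) = ES (fun n => (NP n - c) ^+ 4) by [].
  rewrite (@sub_trick (fun n => (NP n - c) ^+ 4)
     (fun n => (4 * c) * NP n ^+ 3 + (4 * c ^+ 3) * NP n ^+ 1)
     (fun n => 1 * NP n ^+ 4 + ((6 * c ^+ 2) * NP n ^+ 2 + c ^+ 4 * NP n ^+ 0))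
     (4 * c * TC 3 + 4 * c ^+ 3 * TC 1) (TC 4 + (6 * c ^+ 2 * TC 2 + c ^+ 4 * TC 0))) //.
  - by move=> n; exact: exprn_even_ge0.
  - by move=> n; pos.
  - by move=> n; ring.
  - rewrite ESadd //; do ?[by pos | by move=> n; pos].
    rewrite ES1 //; do ?[by pos].
  - rewrite ESadd //; do ?[by pos | by move=> n; pos].
    rewrite ESadd //; do ?[by pos | by move=> n; pos].
    rewrite ES1 //; do ?[by pos].
    all: try by rewrite !EFinD mul1r.
have Ph := Phi_lim.
rewrite C4 C2 cE.
have [A1 eA1] : exists A1, TC 1 = A1 * TC 0 by exists (TC 1 / TC 0); rewrite divfK.
have [A2 eA2] : exists A2, TC 2 = A2 * TC 0 by exists (TC 2 / TC 0); rewrite divfK.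
have [A3 eA3] : exists A3, TC 3 = A3 * TC 0 by exists (TC 3 / TC 0); rewrite divfK.
have [A4 eA4] : exists A4, TC 4 = A4 * TC 0 by exists (TC 4 / TC 0); rewrite divfK.
rewrite eA1 eA2 eA3 eA4 !mulfK // in Ph *.
set T0 := TC 0 in T0n *.
set LHS := (X in X <= _).
set RHS := (X in _ <= X).
have E0 : RHS - LHS = Phi A1 A2 A3 A4.
  by rewrite /RHS /LHS /Phi /k2 /k4; field.
by rewrite -subr_ge0 E0.
Qed.

End Aux.

Theorem lemmaA5 (R : realType) (E : nat -> R) (mu : R)
  (hE0 : forall j, 0 <= E j)
  (hEmono : forall i j : nat, (i <= j)%N -> E i <= E j)
  (hmu : mu < E 0%N)
  (hZ : (Zgc E mu < +oo)%E)
  (hmom : (gc_trace E mu (fun n => (@num_particles R n ^+ 4)%R) < +oo)%E) :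
  central_moment E mu 4 <= 9 * central_moment E mu 2 ^+ 2 + central_moment E mu 2.
Proof. exact: main_ineq hZ hmom. Qed.
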